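(* Consider an arbitrary sequence of instances $\{\mathcal{I}_N\}$ of the non-binary voting game and an arbitrary sequence of strategy profiles $\{\Sigma_N\}_{N\ge1}$, and let $f^N$ be the excess expected vote share of $\Sigma_N$. (i) If $\liminf_{N\to\infty}\sqrt N f^N=+\infty$, then $\lim_{N\to\infty}A(\Sigma_N)=1$. (ii) If there exist a constant $\eta<0$ and an infinite set $\mathcal{N}\subseteq\mathbb{N}$ such that $\sqrt N f^N\le\eta$ for all $N\in\mathcal{N}$, then there exist constants $N_\eta>0$ and $c>0$ such that $A(\Sigma_N)\le1-c$ for all $N\in\mathcal{N}$ with $N>N_\eta$. (iii) If there exist a constant $\eta\ge0$ and an infinite set $\mathcal{N}\subseteq\mathbb{N}$ such that $\sqrt N f^N\le\eta$ for all $N\in\mathcal{N}$, and a constant $\psi>0$ such that $\mathrm{Var}(\sum_{n=1}^NX_n^N\mid W=w)\ge\psi N$ for all $N\in\mathcal{N}$ and all states $w$, then there exist constants $N_\eta>0$ and $c>0$ such that $A(\Sigma_N)\le1-c$ for all $N\in\mathcal{N}$ with $N>N_\eta$.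
   Context: Non-binary voting game. $N$ agents each vote for $\mathbf{A}$ or $\mathbf{R}$. World state $W\in\{1,\dots,\mathcal{W}\}$ (unobserved), prior $P_w>0$. Conditional on $W$, each agent independently receives a signal $S_n\in\{1,\dots,M\}$ with $P_{mw}=\Pr[S_n=m\mid W=w]$, satisfying stochastic dominance. Threshold $\mu\in(0,1)$: $\mathbf{A}$ wins iff at least $\mu N$ agents vote $\mathbf{A}$, else $\mathbf{R}$. Agents have utilities $v_n$ on states $\times\{\mathbf{A},\mathbf{R}\}$ with values in $\{0,\dots,B\}$, $v_n(w,\mathbf{A})$ strictly increasing, $v_n(w,\mathbf{R})$ strictly decreasing in $w$. Constants $\alpha^{\mathbf{A}}_w$, $\alpha^{\mathbf{R}}_w=1-\alpha^{\mathbf{A}}_w$ independent of $N$: exactly $\lfloor\alpha^{\mathbf{R}}_wN\rfloor$ agents prefer $\mathbf{R}$ in state $w$; $\alpha^{\mathbf{A}}_w\ne\mu$. Informed majority decision in $w$: $\mathbf{A}$ if $\alpha^{\mathbf{A}}_w>\mu$, else $\mathbf{R}$. $\mathcal{L}=\{w:\alpha^{\mathbf{A}}_w<\mu\}$, $\mathcal{H}=\{w:\alpha^{\mathbf{A}}_w>\mu\}$, both nonempty. A sequence of instances: $\mathcal{I}_N$ has $N$ agents, all share $\mu$, $(P_w)$, $(P_{mw})$, $(\alpha^{\mathbf{A}}_w)$; utilities arbitrary. Strategy $(\beta_1,\dots,\beta_M)$: probability of voting $\mathbf{A}$ on each signal. $\lambda^{\mathbf{X}}_w(\Sigma)$: ex-ante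 probability that $\mathbf{X}$ wins in state $w$. Fidelity $A(\Sigma)=\sum_{w\in\mathcal{L}}P_w\lambda^{\mathbf{R}}_w(\Sigma)+\sum_{w\in\mathcal{H}}P_w\lambda^{\mathbf{A}}_w(\Sigma)$. For $\Sigma_N$, $X_n^N=1$ if agent $n$ votes $\mathbf{A}$, $0$ otherwise; $f^N_{w\mathbf{A}}=\frac1N\sum_nE[X_n^N\mid W=w]-\mu$, $f^N_{w\mathbf{R}}=\frac1N\sum_nE[1-X_n^N\mid W=w]-(1-\mu)$, and $f^N=\min\big(\min_{w\in\mathcal{H}}f^N_{w\mathbf{A}},\min_{w\in\mathcal{L}}f^N_{w\mathbf{R}}\big)$. *)

(* Defs.v *)
From HB Require Import structures.
From mathcomp Require Import all_boot all_order all_algebra.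
From mathcomp Require Import reals.
Set Implicit Arguments. Unset Strict Implicit. Unset Printing Implicit Defensive.
Import Order.TTheory GRing.Theory Num.Theory.
Local Open Scope ring_scope.

(* States are 'I_Wn.+1 (i.e. w = 1..W with W = Wn+1, shifted to 0..Wn);
   signals are 'I_M; agents of instance N are 'I_N.
   Pm m w = Pr[S_n = m | W = w];  beta n m = prob. agent n votes A on signal m. *)

Section Game.
Variable R : realType.

Definition weight (Wn M N : nat) (Pm : 'I_M -> 'I_Wn.+1 -> R)
  (beta : 'I_N -> 'I_M -> R) (w : 'I_Wn.+1)
  (s : {ffun 'I_N -> 'I_M}) (x : {ffun 'I_N -> bool}) : R :=
  \prod_(n < N) (Pm (s n) w * (if x n then beta n (s n) else 1 - beta n (s n))).

Definition condE (Wn M N : nat) (Pm : 'I_M -> 'I_Wn.+1 -> R)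
  (beta : 'I_N -> 'I_M -> R) (w : 'I_Wn.+1) (g : {ffun 'I_N -> bool} -> R) : R :=
  \sum_(s : {ffun 'I_N -> 'I_M}) \sum_(x : {ffun 'I_N -> bool})
     weight Pm beta w s x * g x.

Definition votesA (N : nat) (x : {ffun 'I_N -> bool}) : R := \sum_(n < N) (x n)%:R.

Definition lamA Wn M N Pm beta (mu : R) w : R :=
  @condE Wn M N Pm beta w (fun x => if mu * N%:R <= votesA x then 1 else 0).
Definition lamR Wn M N Pm beta (mu : R) w : R :=
  @condE Wn M N Pm beta w (fun x => if mu * N%:R <= votesA x then 0 else 1).

Definition fidelity Wn M N (Pw : 'I_Wn.+1 -> R) Pm beta (mu : R)
  (alpha : 'I_Wn.+1 -> R) : R :=
  \sum_(w | alpha w < mu) Pw w * @lamR Wn M N Pm beta mu w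
  + \sum_(w | mu < alpha w) Pw w * @lamA Wn M N Pm beta mu w.

Definition fA Wn M N Pm beta (mu : R) w : R :=
  N%:R^-1 * \sum_(n < N) @condE Wn M N Pm beta w (fun x => (x n)%:R) - mu.
Definition fR Wn M N Pm beta (mu : R) w : R :=
  N%:R^-1 * \sum_(n < N) @condE Wn M N Pm beta w (fun x => 1 - (x n)%:R)
  - (1 - mu).

(* f^N = min( min_{w in H} fA_w , min_{w in L} fR_w ); since alpha_w <> mu
   every state is in exactly one of H, L, so this is the min over all states of
   the per-state term below. *)
Definition fterm Wn M N Pm beta (mu : R) (alpha : 'I_Wn.+1 -> R) w : R :=
  if mu < alpha w then @fA Wn M N Pm beta mu w else @fR Wn M N Pm beta mu w.
Definition excess Wn M N Pm beta (mu : R) (alpha : 'I_Wn.+1 -> R) : R :=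
  \big[Num.min/@fterm Wn M N Pm beta mu alpha ord0]_(w < Wn.+1)
     @fterm Wn M N Pm beta mu alpha w.

Definition varA Wn M N Pm beta w : R :=
  @condE Wn M N Pm beta w (fun x => votesA x ^+ 2)
  - (@condE Wn M N Pm beta w (fun x => votesA x)) ^+ 2.

End Game.

(* Main.v *)
Require Import Defs.
From HB Require Import structures.
From mathcomp Require Import all_boot all_order all_algebra.
From mathcomp Require Import reals sequences exp.
From mathcomp Require Import ring lra.
Import Order.TTheory GRing.Theory Num.Theory.
Local Open Scope ring_scope.
Set Implicit Arguments. Unset Strict Implicit. Unset Printing Implicit Defensive.

Section ExpB.
Variable R : realType.

Lemma expR_low (z : R) : -2 <= z -> 1 + z + z ^+ 2 / 4 <= expR z.
Proof.
move=> hz.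
have -> : expR z = expR (z / 2) * expR (z / 2) by rewrite -expRD; congr expR; lra.
have h1 := expR_ge1Dx (z / 2).
have h0 : 0 <= 1 + z / 2 by lra.
have -> : 1 + z + z ^+ 2 / 4 = (1 + z / 2) * (1 + z / 2) by rewrite expr2; field.
by apply: ler_pM.
Qed.

Lemma expRNK (z : R) : expR z * expR (- z) = 1.
Proof. by rewrite -expRD subrr expR0. Qed.

Lemma expR_up (z : R) : -1 <= z <= 1 -> expR z <= 1 + z + 2 * z ^+ 2.
Proof.
case/andP=> h1 h2.
have hf := expR_low (z := - z) ltac:(lra).
have he := expRNK z.
have e0 := expR_gt0 z.
set e := expR z in he e0 *; set f := expR (- z) in hf he.
have hp : 1 <= (1 + z + 2 * z ^+ 2) * (1 + - z + (- z) ^+ 2 / 4).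
  have -> : (1 + z + 2 * z ^+ 2) * (1 + - z + (- z) ^+ 2 / 4) =
     1 + z ^+ 2 * ((1 - z) * (5/4 - z / 2)) by rewrite !expr2; field.
  have : 0 <= z ^+ 2 * ((1 - z) * (5/4 - z / 2)).
    apply: mulr_ge0; first exact: sqr_ge0.
    apply: mulr_ge0; lra.
  lra.
set Q := 1 + z + 2 * z ^+ 2 in hp *.
set p := 1 + - z + (- z) ^+ 2 / 4 in hf hp.
have p0 : 0 < p.
  rewrite /p; have -> : 1 + - z + (- z) ^+ 2 / 4 = (1 - z / 2) ^+ 2 by rewrite !expr2; field.
  by apply: exprn_gt0; lra.
(* e = 1/f <= 1/p <= Q *)
have : e * p <= 1 by rewrite -[X in _ <= X]he; apply: ler_wpM2l; [exact: ltW|].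
nra.
Qed.

Lemma expR_half_le (a : R) : 0 <= a <= 1 -> expR (a / 2) <= 1 + a.
Proof.
case/andP=> h0 h1.
have hf := expR_ge1Dx (- (a / 2)).
have he := expRNK (a / 2).
have e0 := expR_gt0 (a / 2).
have : expR (a / 2) * (1 + - (a / 2)) <= 1 by rewrite -[X in _ <= X]he; apply: ler_wpM2l; [exact: ltW|].
nra.
Qed.

End ExpB.

Section Prod.
Variable R : realType.
Variable N : nat.
Variable q : 'I_N -> R.

Definition pi (x : {ffun 'I_N -> bool}) : R :=
  \prod_n (if x n then q n else 1 - q n).
Definition E (g : {ffun 'I_N -> bool} -> R) : R := \sum_x pi x * g x.

Lemma E_prod (g : 'I_N -> bool -> R) :
  E (fun x => \prod_n g n (x n)) =
  \prod_n (q n * g n true + (1 - q n) * g n false).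
Proof.
rewrite /E /pi.
transitivity (\prod_n \sum_(b : bool) ((if b then q n else 1 - q n) * g n b)).
  rewrite bigA_distr_bigA; apply: eq_bigr => x _; by rewrite big_split.
by apply: eq_bigr => n _; rewrite big_bool.
Qed.

Lemma E_sum (I : finType) (F : I -> {ffun 'I_N -> bool} -> R) :
  E (fun x => \sum_i F i x) = \sum_i E (F i).
Proof.
rewrite /E; under eq_bigr do rewrite mulr_sumr.
by rewrite exchange_big.
Qed.

Lemma E_add f g : E (fun x => f x + g x) = E f + E g.
Proof. by rewrite /E -big_split; apply: eq_bigr => x _; rewrite mulrDr. Qed.

Lemma E_scale c f : E (fun x => c * f x) = c * E f.
Proof. by rewrite /E mulr_sumr; apply: eq_bigr => x _; rewrite mulrCA. Qed.

Lemma E_ext f g : (forall x, f x = g x) -> E f = E g.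
Proof. by move=> h; rewrite /E; apply: eq_bigr => x _; rewrite h. Qed.

Hypothesis q01 : forall n, 0 <= q n <= 1.

Lemma pi_ge0 x : 0 <= pi x.
Proof.
apply: prodr_ge0 => n _; case: (x n); have := q01 n; case/andP => ? ?; lra.
Qed.

Lemma E_le f g : (forall x, f x <= g x) -> E f <= E g.
Proof.
by move=> h; apply: ler_sum => x _; apply: ler_wpM2l; [exact: pi_ge0|].
Qed.

Lemma E_single i (h : bool -> R) :
  E (fun x => h (x i)) = q i * h true + (1 - q i) * h false.
Proof.
rewrite (E_ext (g := fun x => \prod_n (fun n => if n == i then h else fun _ => 1) n (x n))).
  rewrite (E_prod (fun n => if n == i then h else fun _ => 1)) (bigD1 i) //= eqxx big1 ?mulr1 // => n /negbTE -> ; lra.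
by move=> x; rewrite (bigD1 i) //= eqxx big1 ?mulr1 // => n /negbTE ->.
Qed.

Lemma E_one : E (fun _ => 1) = 1.
Proof.
rewrite (E_ext (g := fun x => \prod_(n < N) (fun _ _ => 1) n (x n))).
  by rewrite (E_prod (fun _ _ => 1)); apply: big1 => n _; lra.
by move=> x; rewrite big1.
Qed.

Lemma E_const c : E (fun _ => c) = c.
Proof.
by rewrite (E_ext (g := fun x => c * 1)) ?E_scale ?E_one ?mulr1 // => x; rewrite mulr1.
Qed.

Lemma E_pair i j (h k : bool -> R) : i != j ->
  E (fun x => h (x i) * k (x j)) =
  (q i * h true + (1 - q i) * h false) * (q j * k true + (1 - q j) * k false).
Proof.
move=> nij.
pose g := fun n => if n == i then h else if n == j then k else fun _ : bool => 1 : R.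
have gi : g i = h by rewrite /g eqxx.
have gj : g j = k by rewrite /g eq_sym (negbTE nij) eqxx.
have go : forall n, n != i -> n != j -> g n = fun _ => 1.
  by move=> n /negbTE ni /negbTE nj; rewrite /g ni nj.
rewrite (E_ext (g := fun x => \prod_n g n (x n))).
  rewrite (E_prod g) (bigD1 i) //= (bigD1 j) 1?eq_sym //= gi gj big1 ?mulr1 //.
  by move=> n /andP [ni nj]; rewrite go //; lra.
move=> x; rewrite (bigD1 i) //= (bigD1 j) 1?eq_sym //= gi gj big1 ?mulr1 //.
by move=> n /andP [ni nj]; rewrite go.
Qed.

Definition Em (h : 'I_N -> bool -> R) n := q n * h n true + (1 - q n) * h n false.

Lemma E_sq_sum (d : 'I_N -> bool -> R) : (forall n, Em d n = 0) ->
  E (fun x => (\sum_n d n (x n)) ^+ 2) =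
  \sum_n Em (fun n b => d n b ^+ 2) n.
Proof.
move=> d0.
rewrite (E_ext (g := fun x => \sum_i \sum_j d i (x i) * d j (x j))); last first.
  by move=> x; rewrite expr2 mulr_suml; apply: eq_bigr => i _; rewrite mulr_sumr.
rewrite E_sum; apply: eq_bigr => i _.
rewrite E_sum (bigD1 i) //= big1 ?addr0.
  rewrite (E_ext (g := fun x => (fun b => d i b ^+ 2) (x i))).
    by rewrite (E_single i (fun b => d i b ^+ 2)).
  by move=> x; rewrite expr2.
move=> j nji; rewrite (E_pair (fun b => d i b) (fun b => d j b)) 1?eq_sym //.
by have := d0 j; rewrite /Em => ->; rewrite mulr0.
Qed.

Lemma Em_le (h1 h2 : 'I_N -> bool -> R) n :
  (forall b, h1 n b <= h2 n b) -> Em h1 n <= Em h2 n.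
Proof.
move=> h; rewrite /Em; have := q01 n; case/andP=> ? ?.
apply: lerD; apply: ler_wpM2l; rewrite ?h //; lra.
Qed.

Lemma E_ind_ge0 (P : {ffun 'I_N -> bool} -> bool) :
  0 <= E (fun x => if P x then 1 else 0).
Proof.
rewrite -[X in X <= _](E_const 0); apply: E_le => x; case: ifP => _; lra.
Qed.

Lemma cantelli (Y : {ffun 'I_N -> bool} -> R) V a :
  E Y = 0 -> E (fun x => Y x ^+ 2) <= V -> 0 < a -> 0 < V ->
  E (fun x => if a <= Y x then 1 else 0) <= V / (V + a ^+ 2).
Proof.
move=> EY EY2 a0 V0.
have [b bdef] : exists b, b = V / a by exists (V / a).
have b0 : 0 < b by rewrite bdef divr_gt0.
have ab0 : 0 < (a + b) ^+ 2 by apply: exprn_gt0; lra.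
have h : forall x, (if a <= Y x then 1 else 0) <=
    ((a + b) ^+ 2)^-1 * (Y x ^+ 2 + (2 * b * Y x + b ^+ 2)).
  move=> x; case: ifP => hx.
    rewrite -[X in X <= _](mulVf (lt0r_neq0 ab0)); apply: ler_wpM2l.
      by rewrite invr_ge0 ltW.
    have : a + b <= Y x + b by lra.
    have : 0 < a + b by lra.
    rewrite !expr2; nra.
  apply: mulr_ge0; first by rewrite invr_ge0 ltW.
  have -> : Y x ^+ 2 + (2 * b * Y x + b ^+ 2) = (Y x + b) ^+ 2 by rewrite !expr2; ring.
  exact: sqr_ge0.
apply: le_trans (E_le h) _.
rewrite (E_scale _ (fun x => Y x ^+ 2 + (2 * b * Y x + b ^+ 2))).
rewrite (E_add (fun x => Y x ^+ 2) (fun x => 2 * b * Y x + b ^+ 2)).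
rewrite (E_add (fun x => 2 * b * Y x) (fun x => b ^+ 2)) (E_scale _ Y) E_const EY mulr0 add0r.
have -> : V / (V + a ^+ 2) = ((a + b) ^+ 2)^-1 * (V + b ^+ 2).
  rewrite bdef; field; rewrite lt0r_neq0 //=.
  by rewrite lt0r_neq0 //; nra.
apply: ler_wpM2l; first by rewrite invr_ge0 ltW.
lra.
Qed.

Lemma Em_lin (h : 'I_N -> bool -> R) c0 c1 c2 n :
  Em (fun n b => c0 + c1 * h n b + c2 * h n b ^+ 2) n =
  c0 + c1 * Em h n + c2 * Em (fun n b => h n b ^+ 2) n.
Proof. rewrite /Em; ring. Qed.

Lemma tilt (d : 'I_N -> bool -> R) (lam : R) :
  (forall n, Em d n = 0) -> (forall n b, -1 <= d n b <= 1) -> 0 < lam ->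
  4 * lam ^+ 2 <= \sum_n Em (fun n b => d n b ^+ 2) n ->
  (1 - expR (-1)) ^+ 2 * expR (- (8 * lam ^+ 2)) <=
  E (fun x => if Num.sqrt (\sum_n Em (fun n b => d n b ^+ 2) n) * (lam / 8 - lam^-1)
                 < \sum_n d n (x n) then 1 else 0).
Proof.
move=> d0 d1 l0 hs.
have [v vdef] : exists v, v = fun n => Em (fun n b => d n b ^+ 2) n by eexists.
rewrite -(eq_bigr _ (fun n _ => congr1 (fun f => f n) vdef)) in hs *.
have [s2 s2def] : exists s2, s2 = \sum_n v n by eexists.
rewrite -s2def in hs *.
have v0 : forall n, 0 <= v n.
  move=> n; rewrite vdef /Em; have := q01 n; case/andP => ? ?.
  by apply: addr_ge0; apply: mulr_ge0; rewrite ?sqr_ge0 //; lra.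
have v1 : forall n, v n <= 1.
  move=> n; rewrite vdef; apply: (@le_trans _ _ (Em (fun _ _ => 1) n)).
    apply: Em_le => b; have := d1 n b; case/andP=> ? ?.
    rewrite expr2; nra.
  rewrite /Em; lra.
have s2p : 0 < s2.
  have : 0 < lam ^+ 2 by rewrite exprn_gt0.
  lra.
have [sg sgdef] : exists sg, sg = Num.sqrt s2 by eexists.
rewrite -sgdef.
have sgp : 0 < sg by rewrite sgdef sqrtr_gt0.
have sg2 : sg ^+ 2 = s2 by rewrite sgdef sqr_sqrtr // ltW.
have [u udef] : exists u, u = lam / sg by eexists.
have u0 : 0 < u by rewrite udef divr_gt0.
have u2 : u ^+ 2 * s2 = lam ^+ 2.
  by rewrite udef -sg2; field; rewrite lt0r_neq0.
have uh : u <= 1/2.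
  rewrite udef ler_pdivrMr //.
  have : (2 * lam) ^+ 2 <= sg ^+ 2 by rewrite sg2 exprMn; lra.
  rewrite !expr2; nra.
pose Z := fun x : {ffun 'I_N -> bool} => expR (u * \sum_n d n (x n)).
have Zpos : forall x, 0 < Z x by move=> x; exact: expR_gt0.
have EZe : E Z = \prod_n Em (fun n b => expR (u * d n b)) n.
  rewrite (E_ext (g := fun x => \prod_n (fun n b => expR (u * d n b)) n (x n))).
    by rewrite (E_prod (fun n b => expR (u * d n b))).
  by move=> x; rewrite /Z mulr_sumr expR_sum.
have EZ2e : E (fun x => Z x ^+ 2) = \prod_n Em (fun n b => expR (2 * u * d n b)) n.
  rewrite (E_ext (g := fun x => \prod_n (fun n b => expR (2 * u * d n b)) n (x n))).
    by rewrite (E_prod (fun n b => expR (2 * u * d n b))).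
  move=> x; rewrite /Z expr2 -expRD -expR_sum; congr expR.
  by rewrite -mulrDl mulr_sumr; apply: eq_bigr => n _; congr (_ * _); ring.
have EZlow : expR (lam ^+ 2 / 8) <= E Z.
  rewrite EZe -u2 (_ : u ^+ 2 * s2 / 8 = \sum_n (u ^+ 2 * v n / 4) / 2); last first.
    by rewrite s2def mulr_sumr mulr_suml; apply: eq_bigr => n _; field.
  rewrite expR_sum; apply: ler_prod => n _; rewrite expR_ge0 /=.
  apply: (@le_trans _ _ (1 + u ^+ 2 * v n / 4)).
    apply: expR_half_le; have := v0 n; have := v1 n.
    have : u ^+ 2 <= 1 by rewrite expr2; nra.
    move=> ? ? ?; apply/andP; split; first by apply: divr_ge0 => //; apply: mulr_ge0 => //; exact: sqr_ge0.
    rewrite ler_pdivrMr //; nra.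
  apply: (@le_trans _ _ (Em (fun n b => 1 + u * d n b + (u ^+ 2 / 4) * d n b ^+ 2) n)).
    by rewrite Em_lin d0 vdef; lra.
  apply: Em_le => b; have := d1 n b; case/andP=> ? ?.
  apply: le_trans (expR_low _) ; last by nra.
  by rewrite exprMn; lra.
have EZ2up : E (fun x => Z x ^+ 2) <= expR (8 * lam ^+ 2).
  rewrite EZ2e -u2 (_ : 8 * (u ^+ 2 * s2) = \sum_n (8 * u ^+ 2 * v n)); last first.
    by rewrite s2def mulr_sumr mulr_sumr; apply: eq_bigr => n _; ring.
  rewrite expR_sum; apply: ler_prod => n _; apply/andP; split.
    rewrite /Em; have := q01 n; case/andP => ? ?.
    by apply: addr_ge0; apply: mulr_ge0; rewrite ?expR_ge0 //; lra.
  apply: (@le_trans _ _ (1 + 8 * u ^+ 2 * v n)); last exact: expR_ge1Dx.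
  apply: (@le_trans _ _ (Em (fun n b => 1 + (2 * u) * d n b + (8 * u ^+ 2) * d n b ^+ 2) n)).
    apply: Em_le => b; have := d1 n b; case/andP=> ? ?.
    apply: le_trans (expR_up _) _; first by apply/andP; split; nra.
    by rewrite exprMn; lra.
  by rewrite Em_lin d0 vdef; lra.
have [th thdef] : exists th, th = expR (-1) :> R by eexists.
have th1 : th < 1 by rewrite thdef -[X in _ < X]expR0 ltr_expR; lra.
have th0 : 0 < th by rewrite thdef expR_gt0.
have EZ1 : 1 <= E Z.
  apply: le_trans EZlow; apply: le_trans (expR_ge1Dx _).
  have : 0 <= lam ^+ 2 / 8 by apply: divr_ge0 => //; exact: sqr_ge0.
  lra.
pose A := fun x => th * E Z < Z x.
pose P := E (fun x => if A x then 1 else 0).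
have key1 : P <= E (fun x => if sg * (lam / 8 - lam^-1) < \sum_n d n (x n) then 1 else 0).
  apply: E_le => x; case: ifP => hA; last by case: ifP => _; lra.
  have hZ : expR (lam ^+ 2 / 8 - 1) < Z x.
    apply: le_lt_trans hA; rewrite expRD mulrC -thdef.
    by apply: ler_wpM2l; [exact: ltW|].
  move: hZ; rewrite /Z ltr_expR => h.
  rewrite ifT //.
  have e : sg * (lam / 8 - lam^-1) * u = lam ^+ 2 / 8 - 1.
    by rewrite udef; field; rewrite !lt0r_neq0.
  by move: h; rewrite -e [u * _]mulrC ltr_pM2r.
apply: le_trans key1.
have P0 : 0 <= P by exact: E_ind_ge0.
have hZA : E Z <= E (fun x => Z x * (if A x then 1 else 0)) + th * E Z.
  have := @E_le Z (fun x => Z x * (if A x then 1 else 0) + th * E Z).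
  rewrite (E_add (fun x => Z x * (if A x then 1 else 0)) (fun _ => th * E Z)) E_const.
  apply => x; case: ifP => hA.
    have : 0 <= th * E Z by apply: mulr_ge0; lra.
    lra.
  by rewrite mulr0 add0r leNgt; exact: negbT hA.
have [m mdef] : exists m, m = (1 - th) * E Z by eexists.
have m1 : 1 - th <= m by rewrite mdef; nra.
have m0 : 0 < m by lra.
have EZ2p : 0 < E (fun x => Z x ^+ 2).
  have := @E_le (fun x => 2 * Z x + (-1)) (fun x => Z x ^+ 2).
  rewrite (E_add (fun x => 2 * Z x) (fun _ => -1)) (E_scale 2 Z) E_const.
  have : forall x, 2 * Z x + -1 <= Z x ^+ 2.
    move=> x; have := sqr_ge0 (Z x - 1); rewrite !expr2; nra.
  move=> H1 H2; have := H2 H1; lra.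
have [c cdef] : exists c, c = E (fun x => Z x ^+ 2) / m by eexists.
have c0 : 0 < c by rewrite cdef divr_gt0.
have hAM : E (fun x => Z x * (if A x then 1 else 0)) <=
    (2 * c)^-1 * E (fun x => Z x ^+ 2) + c / 2 * P.
  rewrite -(E_scale _ (fun x => Z x ^+ 2)) /P -(E_scale (c / 2) (fun x => if A x then 1 else 0)).
  rewrite -(E_add (fun x => (2 * c)^-1 * Z x ^+ 2)).
  apply: E_le => x; case: ifP => hA.
    rewrite !mulr1.
    have -> : (2 * c)^-1 * Z x ^+ 2 + c / 2 = Z x + (Z x - c) ^+ 2 / (2 * c).
      by field; rewrite lt0r_neq0.
    have : 0 <= (Z x - c) ^+ 2 / (2 * c).
      by apply: divr_ge0; [exact: sqr_ge0| lra].
    lra.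
  rewrite !mulr0 addr0; apply: mulr_ge0; last exact: sqr_ge0.
  by rewrite invr_ge0; lra.
have hm2 : m ^+ 2 <= E (fun x => Z x ^+ 2) * P.
  have e1 : (2 * c)^-1 * E (fun x => Z x ^+ 2) = m / 2.
    by rewrite cdef; field; rewrite !lt0r_neq0.
  have : m <= m / 2 + c / 2 * P by rewrite -e1; rewrite mdef in hAM *; lra.
  rewrite cdef => h.
  have : m * m <= E (fun x => Z x ^+ 2) * P.
    have h2 : m / 2 <= E (fun x => Z x ^+ 2) / m / 2 * P by lra.
    have := ler_wpM2l (ltW m0) h2.
    have -> : m * (E (fun x => Z x ^+ 2) / m / 2 * P) = E (fun x => Z x ^+ 2) * P / 2.
      by field; rewrite lt0r_neq0.
    have -> : m * (m / 2) = m * m / 2 by field.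
    lra.
  by rewrite expr2.
rewrite -thdef expRN ler_pdivrMr ?expR_gt0 //.
apply: (le_trans (y := m ^+ 2)).
  by rewrite !expr2; apply: ler_pM => //; lra.
apply: le_trans hm2 _.
by rewrite mulrC; apply: ler_wpM2l.
Qed.

End Prod.

Section Game2.
Variable R : realType.
Variables (Wn M N : nat) (Pw : 'I_Wn.+1 -> R) (Pm : 'I_M -> 'I_Wn.+1 -> R).
Variables (mu : R) (alpha : 'I_Wn.+1 -> R) (beta : 'I_N -> 'I_M -> R).
Hypothesis HPm_ge0 : forall m w, 0 <= Pm m w.
Hypothesis HPm_sum : forall w, \sum_m Pm m w = 1.
Hypothesis Hbeta : forall n m, 0 <= beta n m <= 1.
Hypothesis Halpha : forall w, alpha w != mu.

Definition qs w n := \sum_m Pm m w * beta n m.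

Lemma qs01 w n : 0 <= qs w n <= 1.
Proof.
apply/andP; split.
  by apply: sumr_ge0 => m _; apply: mulr_ge0 => //; case/andP: (Hbeta n m).
rewrite -(HPm_sum w); apply: ler_sum => m _.
rewrite -[X in _ <= X]mulr1; apply: ler_wpM2l => //; by case/andP: (Hbeta n m).
Qed.

Lemma condE_E w g : condE Pm beta w g = E (qs w) g.
Proof.
rewrite /condE /E exchange_big; apply: eq_bigr => x _; rewrite -mulr_suml.
congr (_ * _); rewrite /weight /pi.
rewrite -(bigA_distr_bigA (fun n m => Pm m w * (if x n then beta n m else 1 - beta n m))).
apply: eq_bigr => n _; rewrite /qs; case: (x n) => //.
under eq_bigr do rewrite mulrBr mulr1.
by rewrite sumrB HPm_sum.
Qed.

Definition sgn w : R := if mu < alpha w then -1 else 1.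
Definition dd w n (b : bool) : R := sgn w * (b%:R - qs w n).
Definition Tm w := sgn w * (mu * N%:R - \sum_n qs w n).
Definition Bad w := if alpha w < mu then lamA Pm beta mu w else lamR Pm beta mu w.

Lemma sgn2 w : sgn w * sgn w = 1.
Proof. by rewrite /sgn; case: ifP => _; rewrite ?mulrNN mulr1. Qed.

Lemma dd_Em w n : Em (qs w) (dd w) n = 0.
Proof. by rewrite /Em /dd /=; rewrite mulr1n mulr0n; ring. Qed.

Lemma dd_Em2 w n : Em (qs w) (fun n b => dd w n b ^+ 2) n = qs w n * (1 - qs w n).
Proof.
rewrite /Em /dd /= mulr1n mulr0n !exprMn !expr2 sgn2 !mul1r; ring.
Qed.

Lemma dd_bound w n b : -1 <= dd w n b <= 1.
Proof.
have := qs01 w n; case/andP => h0 h1.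
rewrite /dd /sgn; case: ifP => _; case: b => /=; rewrite ?mulr1n ?mulr0n; apply/andP; split; lra.
Qed.

Lemma sum_dd w (x : {ffun 'I_N -> bool}) : \sum_n dd w n (x n) = sgn w * (votesA R x - \sum_n qs w n).
Proof. by rewrite /votesA /dd -mulr_sumr sumrB. Qed.

Lemma EY2 w : E (qs w) (fun x => (\sum_n dd w n (x n)) ^+ 2) = \sum_n qs w n * (1 - qs w n).
Proof.
rewrite (E_sq_sum (q := qs w) (d := dd w)); last exact: dd_Em.
by apply: eq_bigr => n _; rewrite dd_Em2.
Qed.

Lemma EY2_le w : \sum_n qs w n * (1 - qs w n) <= N%:R / 4.
Proof.
apply: (@le_trans _ _ (\sum_(n < N) 4^-1)).
  apply: ler_sum => n _; have := qs01 w n; case/andP => ? ?.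
  have := sqr_ge0 (qs w n - 2^-1); rewrite !expr2 => h; nra.
rewrite sumr_const card_ord -mulr_natr; lra.
Qed.

Lemma EY0 w : E (qs w) (fun x => \sum_n dd w n (x n)) = 0.
Proof.
rewrite (E_sum (qs w) (fun n x => dd w n (x n))); apply: big1 => n _.
by rewrite (E_single (qs w) n (dd w n)); exact: (dd_Em w n).
Qed.

Lemma votes_eq w (x : {ffun 'I_N -> bool}) : votesA R x = sgn w * \sum_n dd w n (x n) + \sum_n qs w n.
Proof. by rewrite sum_dd mulrA sgn2 mul1r subrK. Qed.

Lemma varA_eq w : varA Pm beta w = \sum_n qs w n * (1 - qs w n).
Proof.
rewrite /varA !condE_E.
set S := \sum_n qs w n.
set Yd := fun x => \sum_n dd w n (x n).
have e1 : E (qs w) (fun x => votesA R x) = S.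
  rewrite (E_ext (qs w) (g := fun x => sgn w * Yd x + S)); last by move=> x; rewrite (votes_eq w).
  rewrite (E_add _ (fun x => sgn w * Yd x) (fun _ => S)) (E_scale _ _ Yd) E_const.
  by rewrite /Yd EY0 mulr0 add0r.
have e2 : E (qs w) (fun x => votesA R x ^+ 2) = E (qs w) (fun x => Yd x ^+ 2) + S ^+ 2.
  rewrite (E_ext (qs w) (g := fun x => Yd x ^+ 2 + ((2 * sgn w * S) * Yd x + S ^+ 2))); last first.
    move=> x; rewrite (votes_eq w) /Yd.
    have h := sgn2 w.
    rewrite !expr2; set a := \sum_n dd w n (x n); set s := sgn w.
    have -> : (s * a + S) * (s * a + S) = (s * s) * (a * a) + (2 * s * S * a + S * S) by ring.
    by rewrite h mul1r.
  rewrite (E_add _ (fun x => Yd x ^+ 2) (fun x => (2 * sgn w * S) * Yd x + S ^+ 2)).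
  rewrite (E_add _ (fun x => (2 * sgn w * S) * Yd x) (fun _ => S ^+ 2)) (E_scale _ _ Yd) E_const.
  by rewrite /Yd EY0 mulr0 add0r.
by rewrite e1 e2 addrK /Yd EY2.
Qed.

Lemma Eq_single w n : E (qs w) (fun x => (x n)%:R) = qs w n.
Proof.
by rewrite (E_single (qs w) n (fun b => b%:R)) /= mulr1n mulr0n mulr1 mulr0 addr0.
Qed.

Lemma fterm_eq w : (0 < N)%N -> fterm Pm beta mu alpha w = Tm w / N%:R.
Proof.
move=> N0.
have Nn : (N%:R : R) != 0 by rewrite pnatr_eq0 -lt0n.
rewrite /fterm /Tm /sgn; case: ifP => _.
  rewrite /fA; under eq_bigr do rewrite condE_E Eq_single.
  by field.
rewrite /fR; under eq_bigr do rewrite condE_E.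
rewrite (eq_bigr (fun n => 1 - qs w n)); last first.
  move=> n _; rewrite (E_single (qs w) n (fun b => 1 - b%:R)) /= mulr1n mulr0n; ring.
rewrite sumrB sumr_const card_ord.
rewrite -[(1 : R) *+ N]mulr_natl mulr1.
by field.
Qed.

Lemma Bad_bounds w :
  E (qs w) (fun x => if Tm w < \sum_n dd w n (x n) then 1 else 0) <= Bad w /\
  Bad w <= E (qs w) (fun x => if Tm w <= \sum_n dd w n (x n) then 1 else 0).
Proof.
have [h|h] := boolP (mu < alpha w).
  have h' : (alpha w < mu) = false by apply/negbTE; rewrite -leNgt ltW.
  rewrite /Bad h' /lamR condE_E; split; apply: (E_le (qs01 w)) => x;
  rewrite /= sum_dd /Tm /sgn h;
  case: (leP (mu * N%:R) (votesA R x)) => h1;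
  case: (ltP (-1 * (mu * N%:R - \sum_n qs w n)) (-1 * (votesA R x - \sum_n qs w n))) => h2; case: (leP (-1 * (mu * N%:R - \sum_n qs w n)) (-1 * (votesA R x - \sum_n qs w n))) => h3;
  lra.
have h' : (alpha w < mu).
  by rewrite lt_neqAle Halpha /= leNgt.
rewrite /Bad h' /lamA condE_E; split; apply: (E_le (qs01 w)) => x;
rewrite /= sum_dd /Tm /sgn (negbTE h);
case: (leP (mu * N%:R) (votesA R x)) => h1;
case: (ltP (1 * (mu * N%:R - \sum_n qs w n)) (1 * (votesA R x - \sum_n qs w n))) => h2; case: (leP (1 * (mu * N%:R - \sum_n qs w n)) (1 * (votesA R x - \sum_n qs w n))) => h3;
lra.
Qed.

Lemma lamAR w : lamA Pm beta mu w + lamR Pm beta mu w = 1.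
Proof.
rewrite /lamA /lamR !condE_E -E_add.
rewrite (E_ext (qs w) (g := fun _ => 1)) ?E_one // => x; case: ifP => _; lra.
Qed.

Lemma Bad01 w : 0 <= Bad w <= 1.
Proof.
have h1 : forall P : {ffun 'I_N -> bool} -> bool, 0 <= E (qs w) (fun x => if P x then 1 else 0) <= 1.
  move=> P; apply/andP; split; first exact: (E_ind_ge0 (qs01 w) P).
  rewrite -[X in _ <= X](E_one (qs w)); apply: E_le; first exact: qs01.
  by move=> x; case: ifP => _; lra.
have := lamAR w; have := h1 (fun x => mu * N%:R <= votesA R x).
rewrite /Bad /lamA /lamR !condE_E.
case: ifP => _; first by [].
move=> /andP [a1 a2] e; apply/andP; split; lra.
Qed.

Lemma fid_eq : \sum_w Pw w = 1 ->
  fidelity Pw Pm beta mu alpha = 1 - \sum_w Pw w * Bad w.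
Proof.
move=> hP.
have hH : forall w, (~~ (alpha w < mu)) = (mu < alpha w).
  by move=> w; rewrite -leNgt le_eqVlt eq_sym (negbTE (Halpha w)).
rewrite /fidelity big_mkcond [X in _ + X]big_mkcond /= -big_split /=.
rewrite -[X in X - _]hP -sumrB; apply: eq_bigr => w _.
have := lamAR w; rewrite /Bad.
have [h|h] := boolP (alpha w < mu).
  have h' : (mu < alpha w) = false by rewrite -hH h.
  rewrite ?h'; move=> e; have -> : lamR Pm beta mu w = 1 - lamA Pm beta mu w by lra.
  ring.
have h' : (mu < alpha w) by rewrite -hH h.
rewrite ?h'; move=> e; have -> : lamA Pm beta mu w = 1 - lamR Pm beta mu w by lra.
ring.
Qed.

Lemma P1 w : (0 < N)%N -> 0 < Tm w -> Bad w <= (N%:R / 4) / (Tm w ^+ 2).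
Proof.
move=> N0 T0.
have V0 : 0 < (N%:R : R) / 4 by apply: divr_gt0 => //; rewrite ltr0n.
case: (Bad_bounds w) => _ h; apply: le_trans h _.
have := @cantelli R N (qs w) (qs01 w) (fun x => \sum_n dd w n (x n)) (N%:R / 4) (Tm w).
rewrite EY0 EY2 => /(_ erefl (EY2_le w) T0 V0) h.
apply: le_trans h _.
apply: ler_wpM2l; first exact: ltW.
have T2 : 0 < Tm w ^+ 2 by apply: exprn_gt0.
rewrite lef_pV2 ?posrE; lra.
Qed.

Lemma P2 w : (0 < N)%N -> Tm w < 0 ->
  1 - (N%:R / 4) / (N%:R / 4 + Tm w ^+ 2) <= Bad w.
Proof.
move=> N0 T0.
have V0 : 0 < (N%:R : R) / 4 by apply: divr_gt0 => //; rewrite ltr0n.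
case: (Bad_bounds w) => h _; apply: le_trans h.
have := @cantelli R N (qs w) (qs01 w) (fun x => - \sum_n dd w n (x n)) (N%:R / 4) (- Tm w).
have e0 : E (qs w) (fun x => - \sum_n dd w n (x n)) = 0.
  rewrite (E_ext (qs w) (g := fun x => (-1) * \sum_n dd w n (x n))); last by move=> x; rewrite mulN1r.
  by rewrite (E_scale (qs w) (-1) (fun x => \sum_n dd w n (x n))) EY0 mulr0.
have e2 : E (qs w) (fun x => (- \sum_n dd w n (x n)) ^+ 2) = \sum_n qs w n * (1 - qs w n).
  by rewrite -EY2; apply: E_ext => x; rewrite sqrrN.
rewrite e0 e2 => /(_ erefl (EY2_le w)) h.
have := h ltac:(lra) V0; rewrite sqrrN => h2.
have hsum : E (qs w) (fun x => if Tm w < \sum_n dd w n (x n) then 1 else 0) +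
            E (qs w) (fun x => if - Tm w <= - \sum_n dd w n (x n) then 1 else 0) = 1.
  rewrite -E_add -[RHS](E_one (qs w)); apply: E_ext => x.
  rewrite lerN2; case: (ltP (Tm w) (\sum_n dd w n (x n))) => _; lra.
lra.
Qed.

Lemma P3 w lam : 0 < lam ->
  4 * lam ^+ 2 <= \sum_n qs w n * (1 - qs w n) ->
  Tm w <= Num.sqrt (\sum_n qs w n * (1 - qs w n)) * (lam / 8 - lam^-1) ->
  (1 - expR (-1)) ^+ 2 * expR (- (8 * lam ^+ 2)) <= Bad w.
Proof.
move=> l0 hs hT.
have es : \sum_n Em (qs w) (fun n b => dd w n b ^+ 2) n = \sum_n qs w n * (1 - qs w n).
  by apply: eq_bigr => n _; rewrite dd_Em2.
have := @tilt R N (qs w) (qs01 w) (dd w) lam (dd_Em w) (dd_bound w) l0.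
rewrite es => /(_ hs) h.
apply: le_trans h _.
case: (Bad_bounds w) => h _; apply: le_trans h.
apply: (E_le (qs01 w)) => x /=.
case: ifP => h1.
  by have h3 := le_lt_trans hT h1; rewrite ifT.
by case: ifP => _; lra.
Qed.

End Game2.

Lemma bigmin_le_seq (R : realType) (I : eqType) (r : seq I) (F : I -> R) x0 w :
  w \in r -> \big[Num.min/x0]_(i <- r) F i <= F w.
Proof.
elim: r => // a r IH; rewrite inE big_cons => /orP [/eqP -> | h].
  by rewrite ge_min lexx.
by rewrite ge_min (IH h) orbT.
Qed.

Lemma bigmin_le (R : realType) k (F : 'I_k -> R) x0 w :
  \big[Num.min/x0]_(i < k) F i <= F w.
Proof. by apply: bigmin_le_seq; rewrite mem_index_enum. Qed.

Lemma bigmin_ex (R : realType) k (F : 'I_k.+1 -> R) :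
  exists w, \big[Num.min/F ord0]_(i < k.+1) F i = F w.
Proof.
elim/big_rec: _ => [|i x _ [w ->]]; first by exists ord0.
by rewrite /Order.min; case: ifP => _; [exists i | exists w].
Qed.


Unset Implicit Arguments.

Theorem theorem7 (R : realType) (Wn M : nat)
  (Pw : 'I_Wn.+1 -> R) (Pm : 'I_M -> 'I_Wn.+1 -> R) (mu : R)
  (alpha : 'I_Wn.+1 -> R)
  (* prior *)
  (HPw_pos : forall w, 0 < Pw w) (HPw_sum : \sum_w Pw w = 1)
  (* signal distributions *)
  (HPm_ge0 : forall m w, 0 <= Pm m w) (HPm_sum : forall w, \sum_m Pm m w = 1)
  (* stochastic dominance: higher states give (first-order) higher signals *)
  (HPm_dom : forall (w1 w2 : 'I_Wn.+1) (k : 'I_M), (w1 <= w2)%N ->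
      \sum_(m : 'I_M | (k <= m)%N) Pm m w1 <= \sum_(m : 'I_M | (k <= m)%N) Pm m w2)
  (* threshold and informed-majority shares *)
  (Hmu : 0 < mu < 1) (Halpha : forall w, alpha w != mu)
  (HL : exists w, alpha w < mu) (HH : exists w, mu < alpha w)
  (* sequence of strategy profiles: beta N n m *)
  (beta : forall N : nat, 'I_N -> 'I_M -> R)
  (Hbeta : forall N n m, 0 <= beta N n m <= 1) :
  let fN := fun N : nat => excess Pm (beta N) mu alpha in
  let AN := fun N : nat => fidelity Pw Pm (beta N) mu alpha in
  (* (i) *)
  ((forall K : R, exists N0 : nat, forall N : nat, (N0 <= N)%N ->
        K <= Num.sqrt (N%:R) * fN N) ->
     forall eps : R, 0 < eps -> exists N0 : nat, forall N : nat, (N0 <= N)%N ->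
        `|AN N - 1| < eps)
  /\
  (* (ii) *)
  (forall (eta : R) (calN : nat -> Prop),
     eta < 0 ->
     (forall K : nat, exists N : nat, (K < N)%N /\ calN N) ->
     (forall N : nat, calN N -> (0 < N)%N -> Num.sqrt (N%:R) * fN N <= eta) ->
     exists (Neta : nat) (c : R), (0 < Neta)%N /\ 0 < c /\
       forall N : nat, calN N -> (Neta < N)%N -> AN N <= 1 - c)
  /\
  (* (iii) *)
  (forall (eta psi : R) (calN : nat -> Prop),
     0 <= eta ->
     (forall K : nat, exists N : nat, (K < N)%N /\ calN N) ->
     (forall N : nat, calN N -> (0 < N)%N -> Num.sqrt (N%:R) * fN N <= eta) ->
     0 < psi ->
     (forall N : nat, calN N -> forall w : 'I_Wn.+1,
        psi * N%:R <= varA Pm (beta N) w) ->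
     exists (Neta : nat) (c : R), (0 < Neta)%N /\ 0 < c /\
       forall N : nat, calN N -> (Neta < N)%N -> AN N <= 1 - c).
Proof.
move=> fN AN.
have Hfid : forall N, AN N = 1 - \sum_w Pw w * Bad Pm mu alpha (beta N) w.
  by move=> N; rewrite /AN (fid_eq (beta N) HPm_sum Halpha HPw_sum).
have Hfle : forall N w, fN N <= fterm Pm (beta N) mu alpha w.
  by move=> N w; rewrite /fN /excess; apply: bigmin_le.
have Hfex : forall N, exists w, fN N = fterm Pm (beta N) mu alpha w.
  by move=> N; rewrite /fN /excess; apply: bigmin_ex.
have HfT : forall N w, (0 < N)%N -> fterm Pm (beta N) mu alpha w = Tm Pm mu alpha (beta N) w / N%:R.
  by move=> N w N0; rewrite (fterm_eq mu alpha (beta N) HPm_sum w N0).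
have HS0 : forall N, 0 <= \sum_w Pw w * Bad Pm mu alpha (beta N) w.
  move=> N; apply: sumr_ge0 => w _; apply: mulr_ge0; first exact: ltW.
  by case/andP: (Bad01 mu alpha HPm_ge0 HPm_sum (Hbeta N) w).
have HSw : forall N w, Pw w * Bad Pm mu alpha (beta N) w <= \sum_w Pw w * Bad Pm mu alpha (beta N) w.
  move=> N w; rewrite (bigD1 w) //= lerDl; apply: sumr_ge0 => w' _; apply: mulr_ge0; first exact: ltW.
  by case/andP: (Bad01 mu alpha HPm_ge0 HPm_sum (Hbeta N) w').
have [cmin cminE] : exists c, c = \big[Num.min/Pw ord0]_(w < Wn.+1) Pw w by eexists.
have cmin0 : 0 < cmin by rewrite cminE; have [w ->] := bigmin_ex Pw.
have cminle : forall w, cmin <= Pw w by move=> w; rewrite cminE; apply: bigmin_le.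
have Hsqrt : forall N : nat, (0 < N)%N -> 0 < Num.sqrt (N%:R : R) /\ Num.sqrt (N%:R : R) ^+ 2 = N%:R.
  move=> N N0; split; first by rewrite sqrtr_gt0 ltr0n.
  by rewrite sqr_sqrtr // ler0n.
split.
  move=> HK eps e0.
  have [K KE] : exists K : R, K = 1 + eps^-1 by eexists.
  have ei : 0 < eps^-1 by rewrite invr_gt0.
  have K1 : 1 <= K by rewrite KE; lra.
  have [N0 HN0] := HK K.
  exists (maxn N0 1) => N hN.
  have N0le : (N0 <= N)%N by apply: leq_trans hN; apply: leq_maxl.
  have Npos : (0 < N)%N by apply: leq_trans hN; apply: leq_maxr.
  have hKN := HN0 N N0le.
  have [s0 s2] := Hsqrt N Npos.
  move: hKN s0 s2; set f := fN N; set s := Num.sqrt (N%:R : R) => hKN s0 s2.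
  have f0 : 0 < f by rewrite ltNge; apply/negP => hf; nra.
  have hB : forall w, Bad Pm mu alpha (beta N) w <= (4 * K ^+ 2)^-1.
    move=> w.
    have hfw := Hfle N w; rewrite (HfT N w Npos) -/f in hfw.
    have Nr0 : (0 : R) < N%:R by rewrite ltr0n.
    have hT : s ^+ 2 * f <= Tm Pm mu alpha (beta N) w.
      by move: hfw; rewrite ler_pdivlMr // s2 mulrC.
    have T0 : 0 < Tm Pm mu alpha (beta N) w by apply: lt_le_trans hT; apply: mulr_gt0 => //; apply: exprn_gt0.
    apply: le_trans (P1 HPm_ge0 HPm_sum (Hbeta N) Halpha Npos T0) _.
    set T := Tm Pm mu alpha (beta N) w in hT T0 *.
    have hT2 : N%:R * K ^+ 2 <= T ^+ 2.
      have : s * K <= T by rewrite expr2 -mulrA in hT; apply: le_trans hT; apply: ler_wpM2l => //; exact: ltW.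
      move=> h; have sK : 0 <= s * K by apply: mulr_ge0; lra.
      rewrite -s2 -exprMn !expr2; nra.
    have -> : (4 * K ^+ 2)^-1 = N%:R / 4 / (N%:R * K ^+ 2).
      by field; apply/andP; split; [rewrite lt0r_neq0 //; lra| rewrite lt0r_neq0].
    apply: ler_wpM2l; first by apply: divr_ge0 => //; exact: ltW.
    rewrite lef_pV2 ?posrE //; [apply: exprn_gt0 => //| apply: mulr_gt0 => //; apply: exprn_gt0; lra].
  rewrite Hfid.
  have hS : \sum_w Pw w * Bad Pm mu alpha (beta N) w <= (4 * K ^+ 2)^-1.
    apply: (@le_trans _ _ (\sum_w Pw w * (4 * K ^+ 2)^-1)).
      by apply: ler_sum => w _; apply: ler_wpM2l; [exact: ltW| exact: hB].
    by rewrite -mulr_suml HPw_sum mul1r.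
  have hK : (4 * K ^+ 2)^-1 < eps.
    have K40 : 0 < 4 * K ^+ 2 by apply: mulr_gt0 => //; apply: exprn_gt0; lra.
    rewrite -(mulr1 ((4 * K ^+ 2)^-1)) ltr_pdivrMl //.
    have eK : eps * K = eps + 1 by rewrite KE mulrDr mulr1 mulfV // lt0r_neq0.
    rewrite expr2; nra.
  have := HS0 N.
  set S := \sum_w _ in hS *.
  have -> : 1 - S - 1 = - S by ring.
  by move=> S0; rewrite normrN ger0_norm //; exact: le_lt_trans hS hK.
have Hbad : forall N w c1, 0 <= c1 -> c1 <= Bad Pm mu alpha (beta N) w ->
    AN N <= 1 - cmin * c1.
  move=> N w c1 c0 h; rewrite Hfid.
  have := HSw N w; have := cminle w.
  move=> h1 h2.
  have : cmin * c1 <= Pw w * Bad Pm mu alpha (beta N) w.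
    by apply: ler_pM => //; exact: ltW.
  lra.
split.
  move=> eta calN eta0 Hinf Hle.
  have [c1 c1E] : exists c1, c1 = 4 * eta ^+ 2 / (1 + 4 * eta ^+ 2) by eexists.
  have e2 : 0 < eta ^+ 2 by rewrite exprn_even_gt0 //= lt_eqF.
  have c10 : 0 < c1 by rewrite c1E divr_gt0 //; lra.
  exists 1%N, (cmin * c1); split => //; split; first exact: mulr_gt0.
  move=> N hN hgt.
  have Npos : (0 < N)%N by apply: ltn_trans hgt.
  have hsf := Hle N hN Npos.
  have [s0 s2] := Hsqrt N Npos.
  have [w hw] := Hfex N.
  apply: (Hbad N w); first exact: ltW.
  rewrite (HfT N w Npos) in hw.
  move: hsf s0 s2 hw; set f := fN N; set s := Num.sqrt (N%:R : R) => hsf s0 s2 hw.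
  have Nr0 : (0 : R) < N%:R by rewrite ltr0n.
  set T := Tm Pm mu alpha (beta N) w in hw *.
  have hT : T = s ^+ 2 * f by rewrite s2 hw; field; rewrite lt0r_neq0.
  have T0 : T < 0.
    rewrite hT; have : s * f < 0 by lra.
    move=> h; rewrite expr2 -mulrA; nra.
  apply: le_trans (P2 HPm_ge0 HPm_sum (Hbeta N) Halpha Npos T0).
  have hT2 : N%:R * eta ^+ 2 <= T ^+ 2.
    have h1 : eta * eta <= (s * f) * (s * f) by nra.
    have -> : T ^+ 2 = s ^+ 2 * ((s * f) * (s * f)) by rewrite hT; ring.
    rewrite -s2 expr2; apply: ler_wpM2l => //; apply: mulr_ge0; exact: ltW.
  have -> : c1 = 1 - (N%:R / 4) / (N%:R / 4 + N%:R * eta ^+ 2).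
    have : 0 < N%:R * eta ^+ 2 by apply: mulr_gt0.
    by move=> ?; rewrite c1E; field; apply/andP; split; rewrite lt0r_neq0 //; lra.
  rewrite lerD2l lerN2; apply: ler_wpM2l; first by apply: divr_ge0 => //; exact: ltW.
  have : 0 < N%:R * eta ^+ 2 by apply: mulr_gt0.
  have : 0 <= T ^+ 2 by exact: sqr_ge0.
  by move=> ? ?; rewrite -/T lef_pV2 ?posrE; lra.
move=> eta psi calN eta0 Hinf Hle psi0 Hvar.
have sp0 : 0 < Num.sqrt psi by rewrite sqrtr_gt0.
have [k kE] : exists k, k = eta / Num.sqrt psi by eexists.
have k0 : 0 <= k by rewrite kE; apply: divr_ge0 => //; exact: ltW.
have ksp : k * Num.sqrt psi = eta by rewrite kE; field; rewrite lt0r_neq0.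
have [lam lamE] : exists lam, lam = 8 * (k + 1) by eexists.
have l8 : 8 <= lam by rewrite lamE; lra.
have l0 : 0 < lam by lra.
have hk : k <= lam / 8 - lam^-1.
  have li0 : 0 < lam^-1 by rewrite invr_gt0.
  have li : lam * lam^-1 = 1 by rewrite mulfV // lt0r_neq0.
  have : lam^-1 <= 1 by nra.
  rewrite lamE; lra.
have [c1 c1E] : exists c1, c1 = (1 - expR (-1)) ^+ 2 * expR (- (8 * lam ^+ 2)) :> R by eexists.
have c10 : 0 < c1.
  have : expR (-1) < 1 :> R by rewrite -[X in _ < X]expR0 ltr_expR; lra.
  move=> h; rewrite c1E; apply: mulr_gt0; last exact: expR_gt0.
  by apply: exprn_gt0; lra.
have [Nb hNb] : exists Nb : nat, 4 * lam ^+ 2 / psi < Nb%:R by eexists; exact: truncnS_gt.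
exists Nb.+1, (cmin * c1); split => //; split; first exact: mulr_gt0.
move=> N hN hgt.
have Npos : (0 < N)%N by apply: leq_ltn_trans hgt.
have hsf := Hle N hN Npos.
have [s0 s2] := Hsqrt N Npos.
have [w hw] := Hfex N.
apply: (Hbad N w); first exact: ltW.
rewrite c1E.
have Hv := Hvar N hN w; rewrite (varA_eq mu alpha (beta N) HPm_sum w) in Hv.
apply: (P3 HPm_ge0 HPm_sum (Hbeta N) Halpha l0).
  apply: le_trans Hv.
  have h1 : 4 * lam ^+ 2 < Nb%:R * psi by rewrite -ltr_pdivrMr.
  have h2 : (Nb%:R : R) <= N%:R by rewrite ler_nat; apply: ltnW; apply: leq_ltn_trans hgt.
  have : Nb%:R * psi <= N%:R * psi by apply: ler_wpM2r => //; exact: ltW.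
  rewrite mulrC; lra.
rewrite (HfT N w Npos) in hw.
move: hsf s0 s2 hw; set f := fN N; set s := Num.sqrt (N%:R : R) => hsf s0 s2 hw.
have Nr0 : (0 : R) < N%:R by rewrite ltr0n.
set T := Tm Pm mu alpha (beta N) w in hw *.
have hT : T = s ^+ 2 * f by rewrite s2 hw; field; rewrite lt0r_neq0.
have hT1 : T <= s * eta by rewrite hT expr2 -mulrA; apply: ler_wpM2l => //; exact: ltW.
set Sg := \sum_n _ in Hv *.
have hSg : Num.sqrt psi * s <= Num.sqrt Sg.
  rewrite /s -sqrtrM; last exact: (ltW psi0).
  exact: ler_wsqrtr.
have Sg0 : 0 <= Num.sqrt Sg by exact: sqrtr_ge0.
apply: le_trans hT1 _.
apply: (@le_trans _ _ (Num.sqrt Sg * k)); last by apply: ler_wpM2l.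
rewrite -ksp.
have : 0 <= (Num.sqrt Sg - Num.sqrt psi * s) * k by apply: mulr_ge0 => //; lra.
lra.
Qed.
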